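(* Let $\gamma>0$ and let $\mathcal Q$ be a collection of probability measures on $\{0,1\}^{\mathbb N}$ such that $\mathrm{Mean}(\mathcal Q)$ has no countable $3\gamma$-cover. Then there exist a coordinate $i\in\mathbb N$, a value $r_i\in(0,1)$, and subcollections $\mathcal Q_1,\mathcal Q_2\subseteq\mathcal Q$ such that neither $\mathrm{Mean}(\mathcal Q_1)$ nor $\mathrm{Mean}(\mathcal Q_2)$ has a countable $3\gamma$-cover, every $q\in\mathrm{Mean}(\mathcal Q_1)$ satisfies $q_i\ge r_i+\gamma$, and every $q\in\mathrm{Mean}(\mathcal Q_2)$ satisfies $q_i\le r_i-\gamma$.
   Context: For a probability measure $\mu$ on $\{0,1\}^{\mathbb N}$, $\mathrm{Mean}(\mu)\in[0,1]^{\mathbb N}$ is the vector whose $j$-th coordinate is $\mathbb E[X_j]$ for $X\sim\mu$; $\mathrm{Mean}(\mathcal Q)=\{\mathrm{Mean}(\mu):\mu\in\mathcal Q\}$. For $\varepsilon>0$, a countable $\varepsilon$-cover of $\mathrm{Mean}(\mathcal Q)$ is a countable set $C\subset[0,1]^{\mathbb N}$ such that every $q\in\mathrm{Mean}(\mathcal Q)$ has some $p\in C$ with $\|q-p\|_\infty<\varepsilon$. *)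

(* Defs.v *)
From HB Require Import structures.
From mathcomp Require Import all_boot all_order all_algebra.
From mathcomp Require Import all_classical all_reals all_analysis.
Set Implicit Arguments. Unset Strict Implicit. Unset Printing Implicit Defensive.
Import Order.TTheory GRing.Theory Num.Theory.
Local Open Scope classical_set_scope.
Local Open Scope ring_scope.

(* {0,1}^N is modelled as nat -> bool, with the product sigma-algebra,
   i.e. the sigma-algebra generated by the coordinate events {x | x j = 1}. *)
Definition coord_events : set (set (nat -> bool)) :=
  [set A | exists j : nat, A = [set x : nat -> bool | x j = true]].

Definition bitseq_space := g_sigma_algebraType coord_events.

Definition Mean (R : realType) (mu : probability bitseq_space R) : nat -> R :=
  fun j => fine (\int[mu]_x (((x : nat -> bool) j)%:R : R)%:E)%E.

Definition MeanSet (R : realType) (Q : set (probability bitseq_space R))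
  : set (nat -> R) := Mean (R:=R) @` Q.

Definition sup_dist (R : realType) (q p : nat -> R) : \bar R :=
  ereal_sup (range (fun j => (`|q j - p j|)%:E)).

Definition has_countable_cover (R : realType) (eps : R) (A : set (nat -> R)) : Prop :=
  exists C : set (nat -> R),
    countable C /\
    (forall p, C p -> forall j, 0 <= p j <= 1) /\
    (forall q, A q -> exists2 p, C p & (sup_dist q p < eps%:E)%E).

(* Main.v *)
Require Import Defs.
From HB Require Import structures.
From mathcomp Require Import all_boot all_order all_algebra.
From mathcomp Require Import all_classical all_reals all_analysis.
Import Order.TTheory GRing.Theory Num.Theory.
Local Open Scope classical_set_scope.
Local Open Scope ring_scope.
From mathcomp Require Import ring lra.
Section S.
Variables (R : realType) (gamma : R).
Let prob := probability bitseq_space R.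
Definition small (P : set prob) := has_countable_cover (3 * gamma) (MeanSet P).

Lemma small_sub (P P' : set prob) : P `<=` P' -> small P' -> small P.
Proof.
move=> PP' [C [cC [C01 HC]]]; exists C; split => //; split => //.
move=> q [mu Pmu <-]; apply: HC; exists mu => //; exact: PP'.
Qed.

Lemma small_bigcup (I : countType) (F : I -> set prob) :
  (forall i, small (F i)) -> small (\bigcup_i F i).
Proof.
move=> HF; have [Cf HCf] := choice HF.
exists (\bigcup_i Cf i); split.
  apply: bigcup_countable => // i _; by case: (HCf i).
split.
  by move=> p [i _ Cip]; case: (HCf i) => _ [+ _]; apply.
move=> q [mu [i _ Fmu] <-]; case: (HCf i) => _ [_ H].
have [p Cp Hp] := H (Mean mu) (ex_intro2 _ _ mu Fmu erefl).
by exists p => //; exists i.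
Qed.

Lemma small0 : small set0.
Proof.
exists set0; split => //; split => //. by move=> q [mu].
Qed.
Lemma small_point (P : set prob) (c : nat -> R) (b : R) :
  (forall j, 0 <= c j <= 1) -> b < 3 * gamma ->
  (forall mu, P mu -> forall j, `|Mean mu j - c j| <= b) -> small P.
Proof.
move=> c01 hb H; exists [set c]; split; first exact: countable1.
split; first by move=> p -> .
move=> q [mu Pmu <-]; exists c => //.
apply: (le_lt_trans (y := b%:E)); last by rewrite lte_fin.
apply: ge_ereal_sup => _ [j _ <-]; rewrite lee_fin; exact: H.
Qed.
End S.
Arguments small {R} gamma P.
Arguments small_sub {R gamma P P'}.
Arguments small_bigcup {R gamma I F}.
Arguments small0 {R} gamma.
Arguments small_point {R gamma P c b}.

Lemma mt (j : nat) : @measurable _ bitseq_space [set x : nat -> bool | x j = true].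
Proof. apply: sub_gen_smallest. by exists j. Qed.

Lemma Mean01 (R : realType) (mu : probability bitseq_space R) j : 0 <= Mean mu j <= 1.
Proof. rewrite /Mean.
have -> : (fun x : bitseq_space => ((x j)%:R : R)%:E) = (fun x => (\1_[set x : nat -> bool | x j = true] x)%:E).
  apply/funext => x /=. rewrite /indic /=. congr ((_)%:R%:E). rewrite /in_mem /= /mem /= /in_set. case: asboolP => /= [-> //| h]; by case: (x j) h.
rewrite integral_indic //; last exact: mt. rewrite setIT.
have h1 := probability_le1 mu (mt j).
have h0 := measure_ge0 mu [set x : nat -> bool | x j = true].
rewrite (fine_ge0 h0) /=. have hf : mu [set x : nat -> bool | x j = true] \is a fin_num by rewrite ge0_fin_numE // (le_lt_trans h1) // ltry. have h11 : (1%E : \bar R) \is a fin_num by []. exact: (fine_le hf h11 h1).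
Qed.

Arguments Mean01 {R}.

Theorem mainTheorem11 (R : realType) (gamma : R)
  (Q : set (probability bitseq_space R)) :
  0 < gamma ->
  ~ has_countable_cover (3 * gamma) (MeanSet Q) ->
  exists (i : nat) (r : R) (Q1 Q2 : set (probability bitseq_space R)),
    0 < r < 1 /\ Q1 `<=` Q /\ Q2 `<=` Q /\
    ~ has_countable_cover (3 * gamma) (MeanSet Q1) /\
    ~ has_countable_cover (3 * gamma) (MeanSet Q2) /\
    (forall q, MeanSet Q1 q -> r + gamma <= q i) /\
    (forall q, MeanSet Q2 q -> q i <= r - gamma).
Proof.
move=> g0 HQ; apply: contrapT => Hn; apply: (HQ).
change (small gamma Q).
pose U i t := [set mu : probability bitseq_space R | Q mu /\ t <= Mean mu i].
pose L i t := [set mu : probability bitseq_space R | Q mu /\ Mean mu i <= t].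
have H : forall i r, 0 < r < 1 -> small gamma (U i (r + gamma)) \/ small gamma (L i (r - gamma)).
  move=> i r hr.
  case: (pselect (small gamma (U i (r + gamma)))) => hu; first by left.
  case: (pselect (small gamma (L i (r - gamma)))) => hl; first by right.
  exfalso; apply: Hn; exists i, r, (U i (r + gamma)), (L i (r - gamma)).
  split => //; split; first by move=> mu [].
  split; first by move=> mu [].
  split => //; split => //.
  by split; move=> q [mu [_ h] <-].
pose T i := [set t | ~ small gamma (U i t)].
pose c i := sup (T i).
have hT0 : forall i, T i 0.
  move=> i hs; apply: (HQ); apply: small_sub hs.
  by move=> mu Qmu; split => //; case/andP: (Mean01 mu i).
have hTub : forall i, ubound (T i) 1.
  move=> i t Tt; rewrite leNgt; apply/negP => t1; apply: Tt.
  apply: small_sub (small0 gamma) => mu [_ h].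
  case/andP: (Mean01 mu i) => _ h1.
  have : t <= 1 by apply: le_trans h h1.
  by rewrite leNgt t1.
have hs : forall i, has_sup (T i).
  by move=> i; split; [exists 0; apply: hT0 | exists 1; apply: hTub].
have c0 : forall i, 0 <= c i by move=> i; apply: sup_upper_bound (hs i) _ (hT0 i).
have c1 : forall i, c i <= 1 by move=> i; apply: ge_sup; [exists 0; apply: hT0 | apply: hTub].
have above : forall i t, c i < t -> small gamma (U i t).
  move=> i t ct; apply: contrapT => nt.
  have := sup_upper_bound (hs i) nt; rewrite -/(c i) leNgt ct //.
have below : forall i t, t < c i -> ~ small gamma (U i t).
  move=> i t tc st.
  have ct : 0 < c i - t by rewrite subr_gt0.
  have [s Ts hs'] := sup_adherent ct (hs i).
  apply: Ts; apply: small_sub st => mu [Qmu h]; split => //.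
  rewrite -/(c i) in hs'.
  have : c i - (c i - t) = t by ring.
  move=> e; rewrite e in hs'. by apply: le_trans h; apply: ltW.
pose B1 i := U i (c i + gamma).
pose B2 i := L i (c i - 2 * gamma - gamma / 2).
pose G := [set mu : probability bitseq_space R | Q mu /\
   forall i, c i - 2 * gamma - gamma / 2 < Mean mu i < c i + gamma].
pose F (o : option (nat + nat)) := match o with
  | None => G | Some (inl i) => B1 i | Some (inr i) => B2 i end.
apply: (small_sub (P' := \bigcup_o F o)).
  move=> mu Qmu.
  case: (pselect (forall i, c i - 2 * gamma - gamma / 2 < Mean mu i < c i + gamma)) => hg.
    by exists None => //.
  have [i hi] := (existsNP _).2 hg.
  case: (lerP (c i + gamma) (Mean mu i)) => h1.
    by exists (Some (inl i)) => //.
  case: (lerP (Mean mu i) (c i - 2 * gamma - gamma / 2)) => h2.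
    by exists (Some (inr i)) => //.
  by exfalso; apply: hi; rewrite h1 h2.
apply: small_bigcup => -[[i|i]|] /=.
- by apply: above; rewrite ltrDl.
- case: (lerP (c i - gamma - gamma / 2) 0) => hr.
    apply: small_sub (small0 gamma) => mu [_ h].
    case/andP: (Mean01 mu i) => h0 _.
    have : Mean mu i < 0 by lra.
    by rewrite ltNge h0.
  have hr' : 0 < c i - gamma - gamma / 2 < 1.
    by apply/andP; split => //; have := c1 i; lra.
  case: (H i _ hr') => [hU|hL].
    by exfalso; apply: (below i _ _ hU); lra.
  apply: small_sub hL => mu [Qmu h]; split => //; lra.
- apply: (small_point (c := c) (b := 2 * gamma + gamma / 2)).
  + by move=> j; rewrite c0 c1.
  + lra.
  + move=> mu [_ h] j; have /andP[h1 h2] := h j.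
    rewrite ler_norml; apply/andP; split; lra.
Qed.
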